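(* Let $\mathfrak{C}=(U,M,I,N,J)$ be a formal decision context, $\mathfrak{C}^c=(U,M,I,N,\neg J)$ its complement, and $E\subseteq M$. Then: (1) $E$ is a II-consistent set of $\mathfrak{C}$ if and only if $E$ is an I-consistent set of $\mathfrak{C}^c$; (2) $E$ is a II-reduction of $\mathfrak{C}$ if and only if $E$ is an I-reduction of $\mathfrak{C}^c$.
   Context: Formal context $(U,M,I)$: $U$ and $M$ are finite nonempty sets and $I\subseteq U\times M$. For $O\subseteq U$ and $C\subseteq M$ define: - $O^{\uparrow}=\{a\mid\forall x\in O\,((x,a)\in I)\}$ and $C^{\downarrow}=\{x\mid\forall a\in C\,((x,a)\in I)\}$; - $O^{\lozenge}=\{a\in M\mid\exists x\in O\,((x,a)\in I)\}$ and $C^{\square}=\{x\in U\mid\forall a\in M\,((x,a)\in I\Rightarrow a\in C)\}$; - $O^{\square}=\{a\in M\mid\forall x\in U\,((x,a)\in I\Rightarrow x\in O)\}$ and $C^{\lozenge}=\{x\in U\mid\exists a\in C\,((x,a)\in I)\}$. The corresponding pairs are: formal concepts $(O,C)$ with $O^\uparrow=C$ and $C^\downarrow=O$ (set $L$); object-oriented concepts with $O^\square=C$ and $C^\lozenge=O$ (set $L_O$); property-oriented concepts with $O^\lozenge=C$ and $C^\square=O$ (set $L_P$). A formal decision context $\mathfrak{C}=(U,M,I,N,J)$ has conditional context $(U,M,I)$ and decision context $(U,N,J)$, with $M\cap N=\emptyset$. Its complement is $\mathfrak{C}^c=(U,M,I,N,\neg J)$, where $(x,t)\in\neg J$ iff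 $(x,t)\notin J$. For $E\subseteq M$, put $I_E=I\cap(U\times E)$; the subcontext $\mathfrak{C}(E)=(U,E,I_E,N,J)$ has conditional context $(U,E,I_E)$. An I-decision rule of a formal decision context is $(O,C)\rightarrow(Y,D)$ with $(O,C)\in L_O$ of its conditional context, $(Y,D)\in L$ of its decision context, $O\subseteq Y$, $O\ne\emptyset$ and $Y\ne U$. A II-decision rule is $(O,C)\rightarrow(Y,D)$ with $(O,C)\in L_O$ of its conditional context, $(Y,D)\in L_P$ of its decision context, $O\subseteq Y$, and (as the paper restricts II-rules in applications) $O\ne\emptyset$ and $Y\ne U$. $\mathfrak{R}_I(\cdot)$ and $\mathfrak{R}_{II}(\cdot)$ denote the sets of these rules. For a rule $(O,C)\rightarrow(Y,D)$ of $\mathfrak{C}(E)$ (respectively $\mathfrak{C}^c(E)=(U,E,I_E,N,\neg J)$) and a rule $(O_1,C_1)\rightarrow(Y_1,D_1)$ of $\mathfrak{C}$ (respectively $\mathfrak{C}^c$) of the same kind, the first implies the second iff $O_1\subseteq O\subseteq Y\subseteq Y_1$. $E$ is II-consistent for $\mathfrak{C}$ if every rule in $\mathfrak{R}_{II}(\mathfrak{C})$ is implied by some rule in $\mathfrak{R}_{II}(\mathfrak{C}(E))$. $E$ is I-consistent for $\mathfrak{C}^c$ if every rule in $\mathfrak{R}_I(\mathfrak{C}^c)$ is implied by some rule in $\mathfrak{R}_I(\mathfrak{C}^c(E))$. A II-reduction (I-reduction) is a II-consistent (I-consistent) set none of whose proper subsets is II-consistent (I-consistent). *)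

(* Defs.v *)
From mathcomp Require Import all_boot.
Set Implicit Arguments. Unset Strict Implicit. Unset Printing Implicit Defensive.

Section Ctx.
Variables (U M N : finType).

(* Conditional context restricted to attribute set E : (U, E, I_E). *)
Definition obox (E : {set M}) (I : U -> M -> bool) (O : {set U}) : {set M} :=
  [set a in E | [forall x, I x a ==> (x \in O)]].
Definition adia (E : {set M}) (I : U -> M -> bool) (C : {set M}) : {set U} :=
  [set x | [exists a, [&& a \in C, a \in E & I x a]]].
Definition obj_concept (E : {set M}) (I : U -> M -> bool) (O : {set U}) (C : {set M}) :=
  obox E I O = C /\ adia E I C = O.

Definition dup (J : U -> N -> bool) (Y : {set U}) : {set N} :=
  [set t | [forall x in Y, J x t]].
Definition ddown (J : U -> N -> bool) (D : {set N}) : {set U} :=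
  [set x | [forall t in D, J x t]].
Definition formal_concept (J : U -> N -> bool) (Y : {set U}) (D : {set N}) :=
  dup J Y = D /\ ddown J D = Y.
Definition odia (J : U -> N -> bool) (Y : {set U}) : {set N} :=
  [set t | [exists x in Y, J x t]].
Definition dbox (J : U -> N -> bool) (D : {set N}) : {set U} :=
  [set x | [forall t, J x t ==> (t \in D)]].
Definition prop_concept (J : U -> N -> bool) (Y : {set U}) (D : {set N}) :=
  odia J Y = D /\ dbox J D = Y.

Definition rule_I (E : {set M}) (I : U -> M -> bool) (J : U -> N -> bool)
  (O : {set U}) (C : {set M}) (Y : {set U}) (D : {set N}) :=
  [/\ obj_concept E I O C, formal_concept J Y D, O \subset Y,
      O != set0 & Y != setT].
Definition rule_II (E : {set M}) (I : U -> M -> bool) (J : U -> N -> bool)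
  (O : {set U}) (C : {set M}) (Y : {set U}) (D : {set N}) :=
  [/\ obj_concept E I O C, prop_concept J Y D, O \subset Y,
      O != set0 & Y != setT].

Definition negJ (J : U -> N -> bool) : U -> N -> bool := fun x t => ~~ J x t.

(* consistency: every rule of the full context (E = M) is implied by a rule of
   the subcontext C(E), where (O,C)->(Y,D) implies (O1,C1)->(Y1,D1)
   iff O1 ⊆ O ⊆ Y ⊆ Y1. *)
Definition consistent_for
  (rule : {set M} -> (U -> M -> bool) -> (U -> N -> bool) ->
          {set U} -> {set M} -> {set U} -> {set N} -> Prop)
  (I : U -> M -> bool) (J : U -> N -> bool) (E : {set M}) :=
  forall O1 C1 Y1 D1, rule setT I J O1 C1 Y1 D1 ->
    exists O C Y D, rule E I J O C Y D /\
      [/\ O1 \subset O, O \subset Y & Y \subset Y1].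

Definition II_consistent I J E := consistent_for rule_II I J E.
Definition I_consistent_compl I J E := consistent_for rule_I I (negJ J) E.

Definition II_reduction I J E :=
  II_consistent I J E /\ forall F : {set M}, F \proper E -> ~ II_consistent I J F.
Definition I_reduction_compl I J E :=
  I_consistent_compl I J E /\
  forall F : {set M}, F \proper E -> ~ I_consistent_compl I J F.

End Ctx.

(* Main.v *)
Require Import Defs.
From mathcomp Require Import all_boot.

Section H.
Variables (U M N : finType).

Lemma dupN (J : U -> N -> bool) Y : dup (negJ J) Y = ~: odia J Y.
Proof.
apply/setP => t; rewrite !inE negb_exists; apply/eq_forallb => x.
by rewrite /negJ negb_and; case: (x \in Y).
Qed.

Lemma ddownN (J : U -> N -> bool) D : ddown (negJ J) (~: D) = dbox J D.
Proof.
apply/setP => x; rewrite !inE; apply/eq_forallb => t.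
by rewrite !inE /negJ; case: (t \in D); case: (J x t).
Qed.

Lemma prop_formal (J : U -> N -> bool) Y D :
  prop_concept J Y D <-> formal_concept (negJ J) Y (~: D).
Proof.
rewrite /prop_concept /formal_concept dupN ddownN; split.
  by case=> -> ->.
by case=> /(congr1 (@setC _)); rewrite !setCK => -> ->.
Qed.

Lemma rule_eq E (I : U -> M -> bool) (J : U -> N -> bool) O C Y D :
  rule_II E I J O C Y D <-> rule_I E I (negJ J) O C Y (~: D).
Proof.
rewrite /rule_II /rule_I; split; case=> a b c d e; split => //; by apply/prop_formal.
Qed.

Lemma cons_eq (I : U -> M -> bool) (J : U -> N -> bool) E :
  II_consistent I J E <-> I_consistent_compl I J E.
Proof.
rewrite /II_consistent /I_consistent_compl /consistent_for; split => H O1 C1 Y1 D1 R.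
  have R' : rule_II setT I J O1 C1 Y1 (~: D1) by apply/rule_eq; rewrite setCK.
  have [O [C [Y [D [R2 S]]]]] := H _ _ _ _ R'.
  by exists O, C, Y, (~: D); split => //; apply/rule_eq.
have [O [C [Y [D [R2 S]]]]] := H _ _ _ _ (proj1 (rule_eq _ _ _ _ _ _ _) R).
exists O, C, Y, (~: D); split => //; apply/rule_eq; by rewrite setCK.
Qed.
End H.

Theorem theorem4p10 (U M N : finType)
  (hU : 0 < #|U|) (hM : 0 < #|M|) (hN : 0 < #|N|)
  (I : U -> M -> bool) (J : U -> N -> bool) (E : {set M}) :
  (II_consistent I J E <-> I_consistent_compl I J E) /\
  (II_reduction I J E <-> I_reduction_compl I J E).
Proof.
split; first exact: cons_eq.
rewrite /II_reduction /I_reduction_compl; split; case=> a b; split.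
- exact/cons_eq.
- by move=> F FE /cons_eq; apply: b.
- exact/cons_eq.
- by move=> F FE /cons_eq; apply: b.
Qed.
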